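(* Let $U\subset\mathbb R^2$ be open and $f\in C^2(U)$ a solution of \[ 2(x-2f_y)(y+2f_x)(f_{yy}-f_{xx})+(1-2f_{xy})(y+2f_x)^2+(x-2f_y)^2(1+2f_{xy})=0 \quad (\ast) \] on $U$. If $x-2f_y\ne0$ on $U$, then $g=\dfrac{y+2f_x}{x-2f_y}$ satisfies the backward inviscid Burgers equation $g_y=g\,g_x$ on $U$. If $y+2f_x\neq0$ on $U$, then $h=\dfrac{x-2f_y}{y+2f_x}$ satisfies $h_x=h\,h_y$ on $U$.
   Context: Equation $(\ast)$ is the equation characterizing graphs $z=f(x,y)$ in the Heisenberg group with vanishing curvature of transversality. *)

(* Defs.v *)
From Stdlib Require Import Reals.
Open Scope R_scope.

Definition open2 (U : R -> R -> Prop) : Prop :=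
  forall x y, U x y -> exists eps, 0 < eps /\
    forall x' y', Rabs (x' - x) < eps -> Rabs (y' - y) < eps -> U x' y'.

Definition cont2_at (F : R -> R -> R) (x y : R) : Prop :=
  forall eps, 0 < eps -> exists delta, 0 < delta /\
    forall x' y', Rabs (x' - x) < delta -> Rabs (y' - y) < delta ->
      Rabs (F x' y' - F x y) < eps.

Definition is_dx (F D : R -> R -> R) (x y : R) : Prop :=
  derivable_pt_lim (fun t => F t y) x (D x y).
Definition is_dy (F D : R -> R -> R) (x y : R) : Prop :=
  derivable_pt_lim (fun t => F x t) y (D x y).

Definition C2_on (U : R -> R -> Prop) (f fx fy fxx fxy fyx fyy : R -> R -> R) : Prop :=
  forall x y, U x y ->
    is_dx f fx x y /\ is_dy f fy x y /\
    is_dx fx fxx x y /\ is_dy fx fxy x y /\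
    is_dx fy fyx x y /\ is_dy fy fyy x y /\
    cont2_at f x y /\ cont2_at fx x y /\ cont2_at fy x y /\
    cont2_at fxx x y /\ cont2_at fxy x y /\ cont2_at fyx x y /\ cont2_at fyy x y.

(* Main.v *)
Require Import Defs.
From Stdlib Require Import Reals Lra.
From Coquelicot Require Import Coquelicot.
Open Scope R_scope.

Lemma dlin (a b c : R) (F : R -> R) (x l : R) :
  derivable_pt_lim F x l ->
  derivable_pt_lim (fun t => a * t + b + c * F t) x (a + c * l).
Proof.
  intro H.
  pose proof (derivable_pt_lim_plus (fun t => a * t + b) (fun t => c * F t) x a (c * l)) as P.
  apply P.
  - pose proof (derivable_pt_lim_plus (mult_real_fct a id) (fct_cte b) x (a*1) 0) as Q.
    rewrite Rmult_1_r, Rplus_0_r in Q. apply Q.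
    + pose proof (derivable_pt_lim_scal id a x 1 (derivable_pt_lim_id x)) as W.
      rewrite Rmult_1_r in W. exact W.
    + apply derivable_pt_lim_const.
  - apply (derivable_pt_lim_scal F c x l H).
Qed.

Lemma Derive_inner (U : R -> R -> Prop) (f fx fy fxx fxy fyx fyy : R -> R -> R) u v :
  open2 U -> C2_on U f fx fy fxx fxy fyx fyy -> U u v ->
  Derive (fun z => Derive (fun t => f z t) v) u = fyx u v
  /\ Derive (fun z => Derive (fun t => f t z) u) v = fxy u v.
Proof.
  intros HO HC Huv.
  destruct (HO u v Huv) as [e [He HU]].
  split.
  - rewrite (Derive_ext_loc _ (fun z => fy z v)).
    + apply is_derive_unique, is_derive_Reals. apply (HC u v Huv).
    + exists (mkposreal e He). intros z Hz.
      apply is_derive_unique, is_derive_Reals.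
      apply (HC z v). apply HU. exact Hz.
      unfold Rminus; rewrite Rplus_opp_r, Rabs_R0; exact He.
  - rewrite (Derive_ext_loc _ (fun z => fx u z)).
    + apply is_derive_unique, is_derive_Reals. apply (HC u v Huv).
    + exists (mkposreal e He). intros z Hz.
      apply is_derive_unique, is_derive_Reals.
      apply (HC u z). apply HU.
      unfold Rminus; rewrite Rplus_opp_r, Rabs_R0; exact He. exact Hz.
Qed.

Lemma schwarz_eq (U : R -> R -> Prop) (f fx fy fxx fxy fyx fyy : R -> R -> R) x y :
  open2 U -> C2_on U f fx fy fxx fxy fyx fyy -> U x y -> fyx x y = fxy x y.
Proof.
  intros HO HC Hxy.
  destruct (Derive_inner U f fx fy fxx fxy fyx fyy x y HO HC Hxy) as [E1 E2].
  rewrite <- E1, <- E2.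
  destruct (HO x y Hxy) as [e [He HU]].
  apply Schwarz.
  - exists (mkposreal e He). intros u v Hu Hv. simpl in *.
    assert (Huv : U u v) by auto.
    destruct (Derive_inner U f fx fy fxx fxy fyx fyy u v HO HC Huv) as [_ _].
    destruct (HC u v Huv) as [h1 [h2 [h3 [h4 [h5 [h6 _]]]]]].
    destruct (HO u v Huv) as [e' [He' HU']].
    repeat split.
    + exists (fx u v). apply is_derive_Reals. exact h1.
    + exists (fy u v). apply is_derive_Reals. exact h2.
    + exists (fyx u v). apply is_derive_Reals.
      apply is_derive_Reals. eapply is_derive_ext_loc; [|apply is_derive_Reals; exact h5].
      exists (mkposreal e' He'). intros z Hz. symmetry.
      apply is_derive_unique, is_derive_Reals. apply (HC z v). apply HU'. exact Hz.
      unfold Rminus; rewrite Rplus_opp_r, Rabs_R0; exact He'.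
    + exists (fxy u v). apply is_derive_Reals.
      apply is_derive_Reals. eapply is_derive_ext_loc; [|apply is_derive_Reals; exact h4].
      exists (mkposreal e' He'). intros z Hz. symmetry.
      apply is_derive_unique, is_derive_Reals. apply (HC u z). apply HU'.
      unfold Rminus; rewrite Rplus_opp_r, Rabs_R0; exact He'. exact Hz.
  - intros eps. destruct (HC x y Hxy) as [_ [_ [_ [_ [_ [_ [_ [_ [_ [_ [_ [c _]]]]]]]]]]]].
    destruct (c eps (cond_pos eps)) as [d [Hd Hc]].
    exists (mkposreal (Rmin d e) (Rmin_pos _ _ Hd He)). intros u v Hu Hv. simpl in *.
    assert (Huv : U u v) by (apply HU; eapply Rlt_le_trans; eauto; apply Rmin_r).
    destruct (Derive_inner U f fx fy fxx fxy fyx fyy u v HO HC Huv) as [-> _].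
    rewrite E1. apply Hc; eapply Rlt_le_trans; eauto; apply Rmin_l.
  - intros eps. destruct (HC x y Hxy) as [_ [_ [_ [_ [_ [_ [_ [_ [_ [_ [c _]]]]]]]]]]].
    destruct (c eps (cond_pos eps)) as [d [Hd Hc]].
    exists (mkposreal (Rmin d e) (Rmin_pos _ _ Hd He)). intros u v Hu Hv. simpl in *.
    assert (Huv : U u v) by (apply HU; eapply Rlt_le_trans; eauto; apply Rmin_r).
    destruct (Derive_inner U f fx fy fxx fxy fyx fyy u v HO HC Huv) as [_ ->].
    rewrite E2. apply Hc; eapply Rlt_le_trans; eauto; apply Rmin_l.
Qed.

Theorem mainTheorem9 (U : R -> R -> Prop) (f fx fy fxx fxy fyx fyy : R -> R -> R) :
  open2 U ->
  C2_on U f fx fy fxx fxy fyx fyy ->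
  (forall x y, U x y ->
     2 * (x - 2 * fy x y) * (y + 2 * fx x y) * (fyy x y - fxx x y)
     + (1 - 2 * fxy x y) * (y + 2 * fx x y) ^ 2
     + (x - 2 * fy x y) ^ 2 * (1 + 2 * fxy x y) = 0) ->
  ((forall x y, U x y -> x - 2 * fy x y <> 0) ->
     let g := fun x y => (y + 2 * fx x y) / (x - 2 * fy x y) in
     forall x y, U x y -> exists gx gy,
       derivable_pt_lim (fun t => g t y) x gx /\
       derivable_pt_lim (fun t => g x t) y gy /\
       gy = g x y * gx)
  /\
  ((forall x y, U x y -> y + 2 * fx x y <> 0) ->
     let h := fun x y => (x - 2 * fy x y) / (y + 2 * fx x y) in
     forall x y, U x y -> exists hx hy,
       derivable_pt_lim (fun t => h t y) x hx /\
       derivable_pt_lim (fun t => h x t) y hy /\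
       hx = h x y * hy).
Proof.
  intros HO HC Heq.
  split.
  - intros Hnz g x y Hxy.
    destruct (HC x y Hxy) as [_ [_ [h3 [h4 [h5 [h6 _]]]]]].
    pose proof (schwarz_eq U f fx fy fxx fxy fyx fyy x y HO HC Hxy) as S.
    pose proof (Heq x y Hxy) as E. pose proof (Hnz x y Hxy) as N.
    pose proof (dlin 0 y 2 (fun t => fx t y) x _ h3) as a1.
    pose proof (dlin 1 0 (-2) (fun t => fy t y) x _ h5) as a2.
    pose proof (dlin 1 0 2 (fun t => fx x t) y _ h4) as b1.
    pose proof (dlin 0 x (-2) (fun t => fy x t) y _ h6) as b2.
    pose proof (derivable_pt_lim_div _ _ _ _ _ a1 a2) as G1.
    pose proof (derivable_pt_lim_div _ _ _ _ _ b1 b2) as G2.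
    cbv beta in G1, G2.
    assert (N1 : 1 * x + 0 + -2 * fy x y <> 0) by (intro; apply N; lra).
    assert (N2 : 0 * y + x + -2 * fy x y <> 0) by (intro; apply N; lra).
    specialize (G1 N1). specialize (G2 N2).
    eexists; eexists; split; [|split].
    + eapply derivable_pt_lim_ext; [|exact G1].
      intro t. unfold g, div_fct. f_equal; ring.
    + eapply derivable_pt_lim_ext; [|exact G2].
      intro t. unfold g, div_fct. f_equal; ring.
    + unfold g. rewrite S. unfold Rsqr.
      apply Rminus_diag_uniq.
      replace (_ - _) with (( 2 * (x - 2 * fy x y) * (y + 2 * fx x y) * (fyy x y - fxx x y)
     + (1 - 2 * fxy x y) * (y + 2 * fx x y) ^ 2
     + (x - 2 * fy x y) ^ 2 * (1 + 2 * fxy x y)) / (x - 2 * fy x y) ^ 3)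
        by (field; intro; apply N; lra).
      rewrite E. unfold Rdiv. ring.
  - intros Hnz h x y Hxy.
    destruct (HC x y Hxy) as [_ [_ [h3 [h4 [h5 [h6 _]]]]]].
    pose proof (schwarz_eq U f fx fy fxx fxy fyx fyy x y HO HC Hxy) as S.
    pose proof (Heq x y Hxy) as E. pose proof (Hnz x y Hxy) as N.
    pose proof (dlin 0 y 2 (fun t => fx t y) x _ h3) as a1.
    pose proof (dlin 1 0 (-2) (fun t => fy t y) x _ h5) as a2.
    pose proof (dlin 1 0 2 (fun t => fx x t) y _ h4) as b1.
    pose proof (dlin 0 x (-2) (fun t => fy x t) y _ h6) as b2.
    pose proof (derivable_pt_lim_div _ _ _ _ _ a2 a1) as G1.
    pose proof (derivable_pt_lim_div _ _ _ _ _ b2 b1) as G2.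
    cbv beta in G1, G2.
    assert (N1 : 0 * x + y + 2 * fx x y <> 0) by (intro; apply N; lra).
    assert (N2 : 1 * y + 0 + 2 * fx x y <> 0) by (intro; apply N; lra).
    specialize (G1 N1). specialize (G2 N2).
    eexists; eexists; split; [|split].
    + eapply derivable_pt_lim_ext; [|exact G1].
      intro t. unfold h, div_fct. f_equal; ring.
    + eapply derivable_pt_lim_ext; [|exact G2].
      intro t. unfold h, div_fct. f_equal; ring.
    + unfold h. rewrite S. unfold Rsqr.
      apply Rminus_diag_uniq.
      replace (_ - _) with (( 2 * (x - 2 * fy x y) * (y + 2 * fx x y) * (fyy x y - fxx x y)
     + (1 - 2 * fxy x y) * (y + 2 * fx x y) ^ 2
     + (x - 2 * fy x y) ^ 2 * (1 + 2 * fxy x y)) / (y + 2 * fx x y) ^ 3)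
        by (field; intro; apply N; lra).
      rewrite E. unfold Rdiv. ring.
Qed.
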